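(* Let $n \geq 0$ be an integer. Then the value $H_0(2a-n, a)$ is the same for all integers $a \geq 2n$.
   Context: For a finite poset, the Hasse diagram is the directed graph on its points whose arcs are the covering pairs $x \to y$ ($x<y$ with no $w$ satisfying $x<w<y$). Posets are counted up to isomorphism (unlabeled). $H_0(p,a)$ is the number of isomorphism classes of posets with $p$ points and exactly $a$ arcs in the Hasse diagram that have no isolated points (an isolated point is a point incident to no arc of the Hasse diagram). By convention the empty poset is counted, so $H_0(0,0) = 1$. *)

(* Defs.v *)
From mathcomp Require Import all_boot all_fingroup.
Set Implicit Arguments. Unset Strict Implicit. Unset Printing Implicit Defensive.

Definition prel (p : nat) := {ffun 'I_p * 'I_p -> bool}.

Definition le_of (p : nat) (r : prel p) (x y : 'I_p) : bool := r (x, y).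

Definition is_poset (p : nat) (r : prel p) : bool :=
  [&& [forall x, le_of r x x],
      [forall x, forall y, (le_of r x y && le_of r y x) ==> (x == y)] &
      [forall x, forall y, forall z,
         (le_of r x y && le_of r y z) ==> le_of r x z]].

Definition lt_of (p : nat) (r : prel p) (x y : 'I_p) : bool :=
  (x != y) && le_of r x y.

Definition covers (p : nat) (r : prel p) (x y : 'I_p) : bool :=
  lt_of r x y && ~~ [exists w, lt_of r x w && lt_of r w y].

Definition n_arcs (p : nat) (r : prel p) : nat :=
  #|[set xy : 'I_p * 'I_p | covers r xy.1 xy.2]|.

Definition no_isolated (p : nat) (r : prel p) : bool :=
  [forall x, exists y, covers r x y || covers r y x].

Definition H0_labelled (p a : nat) : {set prel p} :=
  [set r : prel p | [&& is_poset r, n_arcs r == a & no_isolated r]].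

Definition poset_iso (p : nat) (r r' : prel p) : bool :=
  [exists s : {perm 'I_p}, forall x, forall y, le_of r x y == le_of r' (s x) (s y)].

Definition H0 (p a : nat) : nat :=
  #|[set [set r' in H0_labelled p a | poset_iso r r'] | r in H0_labelled p a]|.

(* Main.v *)
Require Import Defs.
From mathcomp Require Import all_boot all_fingroup.
From mathcomp Require Import zify.
Set Implicit Arguments. Unset Strict Implicit. Unset Printing Implicit Defensive.

Section Gen.
Variable p : nat.
Implicit Types r : prel p.

Lemma posetP r : is_poset r ->
  [/\ forall x, le_of r x x,
      forall x y, le_of r x y -> le_of r y x -> x = y &
      forall x y z, le_of r x y -> le_of r y z -> le_of r x z].
Proof.
case/and3P=> /forallP H1 /forallP H2 /forallP H3; split=> //.
  by move=> x y a b; move: (H2 x) => /forallP /(_ y); rewrite a b => /eqP.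
by move=> x y z a b; move: (H3 x) => /forallP /(_ y) /forallP /(_ z); rewrite a b.
Qed.

Lemma isoP r r' :
  reflect (exists s : {perm 'I_p}, forall x y, le_of r x y = le_of r' (s x) (s y))
          (poset_iso r r').
Proof.
apply: (iffP existsP) => [[s /forallP H]|[s H]]; exists s.
  by move=> x y; move: (H x) => /forallP /(_ y) /eqP.
by apply/forallP => x; apply/forallP => y; rewrite H.
Qed.

Lemma iso_refl r : poset_iso r r.
Proof. by apply/isoP; exists 1%g => x y; rewrite !perm1. Qed.

Lemma iso_sym r r' : poset_iso r r' -> poset_iso r' r.
Proof.
case/isoP=> s H; apply/isoP; exists (s^-1)%g => x y.
by rewrite H !permKV.
Qed.

Lemma iso_trans r1 r2 r3 : poset_iso r1 r2 -> poset_iso r2 r3 -> poset_iso r1 r3.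
Proof.
case/isoP=> s H; case/isoP=> t K; apply/isoP; exists (s * t)%g => x y.
by rewrite H K !permM.
Qed.

Definition cls (S : {set prel p}) r := [set r' in S | poset_iso r r'].

Lemma cls_eq (S : {set prel p}) r1 r2 : r1 \in S -> r2 \in S -> (cls S r1 == cls S r2) = poset_iso r1 r2.
Proof.
move=> h1 h2; apply/eqP/idP => [E|I].
  have : r2 \in cls S r2 by rewrite inE h2 iso_refl.
  by rewrite -E inE => /andP[].
apply/setP => r'; rewrite !inE; case: (r' \in S) => //=; apply/idP/idP => J.
  exact: iso_trans (iso_sym I) J.
exact: iso_trans I J.
Qed.
End Gen.

Lemma card_imset_equiv (T U V : finType) (S : {set T}) (h1 : T -> U) (h2 : T -> V) :
  {in S &, forall x y, (h1 x == h1 y) = (h2 x == h2 y)} -> #|h1 @: S| = #|h2 @: S|.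
Proof.
move=> hyp.
case: (set_0Vmem S) => [S0|[x0 x0S]].
  by rewrite S0; apply/eqP; rewrite eqn_leq !(leq_trans (leq_imset_card _ _)) ?cards0.
pose k C := h2 (odflt x0 [pick x in S | h1 x == C]).
have kE : {in S, forall x, k (h1 x) = h2 x}.
  move=> x xS; rewrite /k; case: pickP => [y|H] /=.
    case/andP=> yS e.
    by apply/eqP; rewrite -hyp.
  by have := H x; rewrite xS eqxx.
have -> : h2 @: S = k @: (h1 @: S).
  by rewrite -imset_comp; apply: eq_in_imset => x xS /=; rewrite kE.
rewrite (card_in_imset (f:=k)) //.
move=> _ _ /imsetP[x xS ->] /imsetP[y yS ->]; rewrite !kE // => /eqP.
by rewrite -hyp // => /eqP.
Qed.

Lemma count_transfer p q (S : {set prel p}) (T : {set prel q}) (F : prel p -> prel q) :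
  {in S, forall r, F r \in T} ->
  {in S &, forall r1 r2, poset_iso (F r1) (F r2) = poset_iso r1 r2} ->
  {in T, forall t, exists2 r, r \in S & poset_iso t (F r)} ->
  #|cls S @: S| = #|cls T @: T|.
Proof.
move=> HF Hiso Hs.
have -> : cls T @: T = (fun r => cls T (F r)) @: S.
  apply/setP => C; apply/imsetP/imsetP => [[t tT ->]|[r rS ->]].
    case: (Hs t tT) => r rS I; exists r => //; apply/eqP; rewrite cls_eq //; exact: HF.
  by exists (F r) => //; exact: HF.
apply: card_imset_equiv => r1 r2 h1 h2.
by rewrite !cls_eq ?HF // Hiso.
Qed.

Section Inv.
Variable p : nat.
Variables (r r' : prel p) (s : {perm 'I_p}).
Hypothesis H : forall x y, le_of r x y = le_of r' (s x) (s y).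

Lemma inv_lt x y : lt_of r x y = lt_of r' (s x) (s y).
Proof. by rewrite /lt_of H (inj_eq perm_inj). Qed.

Lemma inv_cov x y : covers r x y = covers r' (s x) (s y).
Proof.
rewrite /covers inv_lt; congr (_ && ~~ _).
apply/existsP/existsP => [[w]|[w]].
  by rewrite !inv_lt => ?; exists (s w).
by move=> h; exists (s^-1 w)%g; rewrite !inv_lt permKV.
Qed.

Lemma inv_H0 a : r \in H0_labelled p a -> r' \in H0_labelled p a.
Proof.
rewrite !inE => /and3P[P /eqP A N].
have E x y : le_of r' x y = le_of r (s^-1 x)%g (s^-1 y)%g by rewrite H !permKV.
have Ec x y : covers r' x y = covers r (s^-1 x)%g (s^-1 y)%g by rewrite inv_cov !permKV.
case: (posetP P) => R1 R2 R3.
apply/and3P; split.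
- apply/and3P; split.
  + by apply/forallP => x; rewrite E.
  + apply/forallP => x; apply/forallP => y; apply/implyP; rewrite !E => /andP[h1 h2].
    by have := R2 _ _ h1 h2 => /(can_inj (permKV s)) ->.
  + apply/forallP => x; apply/forallP => y; apply/forallP => z; apply/implyP.
    by rewrite !E => /andP[h1 h2]; exact: R3 h1 h2.
- rewrite -A /n_arcs.
  have -> : [set xy | covers r' xy.1 xy.2] =
            (fun xy : 'I_p * 'I_p => (s xy.1, s xy.2)) @: [set xy | covers r xy.1 xy.2].
    apply/setP => -[x y]; rewrite inE /=; apply/idP/imsetP => [c|[[u v]]].
      by exists ((s^-1 x)%g, (s^-1 y)%g); rewrite ?inE -?Ec //= !permKV.
    by rewrite inE /= => c [-> ->]; rewrite -inv_cov.
  rewrite card_imset // => -[x y] [u v] /= [/perm_inj -> /perm_inj ->] //.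
- apply/forallP => x; move/forallP: N => /(_ (s^-1 x)%g) /existsP[y c].
  by apply/existsP; exists (s y); rewrite !Ec permK.
Qed.
End Inv.

Definition F p (r : prel p) : prel (p + 2) :=
  [ffun xy => match split xy.1, split xy.2 with
              | inl i, inl j => r (i, j)
              | inr i, inr j => (i <= j)%N
              | _, _ => false end].

Definition ichain q (R : prel q) (u0 u1 : 'I_q) := forall z,
  [/\ le_of R z u0 = (z == u0), le_of R u0 z = (z == u0) || (z == u1),
      le_of R z u1 = (z == u0) || (z == u1) & le_of R u1 z = (z == u1)].

Lemma ichain_tr q (R R' : prel q) (t : {perm 'I_q}) u0 u1 :
  (forall x y, le_of R x y = le_of R' (t x) (t y)) ->
  ichain R u0 u1 -> ichain R' (t u0) (t u1).
Proof.
move=> H C z; have := C (t^-1 z)%g; rewrite !H permKV.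
have e x : (t^-1 z == x)%g = (z == t x) by rewrite -(inj_eq (@perm_inj _ t)) permKV.
by rewrite !e.
Qed.

Lemma I2 (j : 'I_2) : j = ord0 \/ j = ord_max.
Proof. by case: j => [[|[|//]]] H; [left|right]; apply: val_inj. Qed.

Section FProps.
Variable p : nat.
Variable r : prel p.
Local Notation L := (@lshift p 2).
Local Notation N := (@rshift p 2).
Local Notation N0 := (rshift p (@ord0 1)).
Local Notation N1 := (rshift p (@ord_max 1)).

Lemma splitL i : split (L i) = inl i. Proof. exact: (unsplitK (inl i)). Qed.
Lemma splitN j : split (N j) = inr j. Proof. exact: (unsplitK (inr j)). Qed.

Lemma FLL i j : le_of (F r) (L i) (L j) = le_of r i j.
Proof. by rewrite /le_of ffunE /= !splitL. Qed.
Lemma FLN i j : le_of (F r) (L i) (N j) = false.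
Proof. by rewrite /le_of ffunE /= splitL splitN. Qed.
Lemma FNL i j : le_of (F r) (N j) (L i) = false.
Proof. by rewrite /le_of ffunE /= splitL splitN. Qed.
Lemma FNN i j : le_of (F r) (N i) (N j) = (i <= j)%N.
Proof. by rewrite /le_of ffunE /= !splitN. Qed.

Lemma F_ichain : ichain (F r) N0 N1.
Proof.
move=> z; case: (split_ordP z) => [i|j] ->.
  by rewrite !FLN !FNL !eq_lrshift.
rewrite !FNN !(inj_eq (@rshift_inj _ _)).
by case: (I2 j) => ->.
Qed.

Lemma N01 : N0 != N1.
Proof. by rewrite (inj_eq (@rshift_inj _ _)). Qed.

End FProps.

Section FProps2.
Variable p : nat.
Variable r : prel p.
Local Notation L := (@lshift p 2).
Local Notation N := (@rshift p 2).
Local Notation N0 := (rshift p (@ord0 1)).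
Local Notation N1 := (rshift p (@ord_max 1)).

Let FE := (FLL, FLN, FNL, FNN).

Lemma F_poset : is_poset (F r) = is_poset r.
Proof.
apply/idP/idP => P.
  case: (posetP P) => R1 R2 R3; apply/and3P; split.
  - by apply/forallP => x; rewrite -FLL.
  - apply/forallP => x; apply/forallP => y; apply/implyP; rewrite -!(FLL r) => /andP[h1 h2].
    by have := R2 _ _ h1 h2 => /lshift_inj ->.
  - apply/forallP => x; apply/forallP => y; apply/forallP => z; apply/implyP.
    by rewrite -!(FLL r) => /andP[h1 h2]; exact: R3 h1 h2.
case: (posetP P) => R1 R2 R3; apply/and3P; split.
- by apply/forallP => x; case: (split_ordP x) => [i|j] ->; rewrite FE.
- apply/forallP => x; apply/forallP => y; apply/implyP.
  case: (split_ordP x) => [i|j] ->; case: (split_ordP y) => [k|l] ->; rewrite ?FE //.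
    by case/andP=> h1 h2; rewrite (R2 _ _ h1 h2).
  by move=> h; apply/eqP; congr rshift; apply/val_inj/anti_leq.
- apply/forallP => x; apply/forallP => y; apply/forallP => z; apply/implyP.
  case: (split_ordP x) => [i|j] ->; case: (split_ordP y) => [k|l] ->;
    case: (split_ordP z) => [m|o] ->; rewrite ?FE ?andbF //.
    by case/andP; exact: R3.
  by case/andP; exact: leq_trans.
Qed.

Lemma F_ltLL i j : lt_of (F r) (L i) (L j) = lt_of r i j.
Proof. by rewrite /lt_of FLL eq_lshift. Qed.

Lemma F_covLL i j : covers (F r) (L i) (L j) = covers r i j.
Proof.
rewrite /covers F_ltLL; congr (_ && ~~ _).
apply/existsP/existsP => [[w]|[w]].
  case: (split_ordP w) => [k|l] ->; last by rewrite /lt_of FLN andbF.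
  by rewrite !F_ltLL => ?; exists k.
by rewrite -!F_ltLL => ?; exists (L w).
Qed.

Lemma F_covLN i j : covers (F r) (L i) (N j) = false.
Proof. by rewrite /covers /lt_of FLN andbF. Qed.
Lemma F_covNL i j : covers (F r) (N j) (L i) = false.
Proof. by rewrite /covers /lt_of FNL andbF. Qed.
Lemma F_covNN i j : covers (F r) (N i) (N j) = (i < j)%N.
Proof.
rewrite /covers /lt_of FNN (inj_eq (@rshift_inj _ _)).
have -> : (i != j) && (i <= j)%N = (i < j)%N by rewrite ltn_neqAle.
case: ltnP => //= ij; apply/negP => /existsP[w].
case: (split_ordP w) => [k|l] ->; first by rewrite /lt_of FNL /= andbF.
rewrite /lt_of !FNN !(inj_eq (@rshift_inj _ _)) => /andP[/andP[a b] /andP[c d]].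
move: a b c d ij; case: (I2 i) => ->; case: (I2 j) => ->; case: (I2 l) => -> //.
Qed.

Lemma F_arcs : n_arcs (F r) = (n_arcs r).+1.
Proof.
rewrite /n_arcs.
have -> : [set xy | covers (F r) xy.1 xy.2] =
   (N0, N1) |: ((fun xy : 'I_p * 'I_p => (L xy.1, L xy.2)) @: [set xy | covers r xy.1 xy.2]).
  apply/setP => -[x y]; rewrite in_setU1 inE /=.
  case: (split_ordP x) => [i|j] ->; case: (split_ordP y) => [k|l] ->.
  - rewrite xpair_eqE eq_lrshift /= F_covLL; apply/idP/imsetP => [c|[[u v]]].
      by exists (i, k); rewrite ?inE.
    by rewrite inE /= => c [/val_inj -> /val_inj ->].
  - rewrite F_covLN xpair_eqE eq_lrshift /=; apply/esym/negP => /imsetP[[u v] _ [_]].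
    by move=> e; move: (ltn_ord v); rewrite -e; lia.
  - rewrite F_covNL xpair_eqE eq_lrshift andbF /=; apply/esym/negP => /imsetP[[u v] _ []].
    by move=> e; move: (ltn_ord u); rewrite -e; lia.
  - rewrite F_covNN xpair_eqE !(inj_eq (@rshift_inj _ _)).
    have -> : ((N j, N l) \in [set (L xy.1, L xy.2) | xy in [set xy | covers r xy.1 xy.2]]) = false.
      by apply/negP => /imsetP[[u v] _ []] e; move: (ltn_ord u); rewrite -e; lia.
    by case: (I2 j) => ->; case: (I2 l) => ->.
rewrite cardsU1 card_imset; last first.
  by move=> [u v] [u' v'] /= [/val_inj -> /val_inj ->].
have -> : (N0, N1) \notin [set (L xy.1, L xy.2) | xy in [set xy | covers r xy.1 xy.2]].
  by apply/imsetP => -[[u v] _ []] e; move: (ltn_ord u); rewrite -e; lia.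
by [].
Qed.

Lemma F_noiso : no_isolated (F r) = no_isolated r.
Proof.
rewrite /no_isolated; apply/forallP/forallP => H x.
  have [y Hy] := @existsP _ _ (H (L x)). apply/existsP. move: Hy.
  case: (split_ordP y) => [k|l] ->; last by rewrite F_covLN F_covNL.
  by rewrite !F_covLL; exists k.
case: (split_ordP x) => [i|j] ->.
  have /existsP [y c] := H i; apply/existsP; exists (L y); by rewrite !F_covLL.
apply/existsP; case: (I2 j) => ->.
  by exists N1; rewrite F_covNN.
by exists N0; rewrite !F_covNN orbT.
Qed.

Lemma F_H0 a : (F r \in H0_labelled (p + 2) a.+1) = (r \in H0_labelled p a).
Proof. by rewrite !inE F_poset F_arcs F_noiso eqSS. Qed.

End FProps2.

Lemma swap_aut q (R : prel q) u0 u1 v0 v1 :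
  ichain R u0 u1 -> ichain R v0 v1 -> u0 != u1 -> v0 != v1 ->
  forall x y, le_of R x y =
    le_of R ((tperm u0 v0 * tperm u1 v1)%g x) ((tperm u0 v0 * tperm u1 v1)%g y).
Proof.
move=> Cu Cv nu nv.
have Lu y : le_of R u0 y = (y == u0) || (y == u1) by case: (Cu y).
have Lu' y : le_of R u1 y = (y == u1) by case: (Cu y).
have Ru y : le_of R y u0 = (y == u0) by case: (Cu y).
have Ru' y : le_of R y u1 = (y == u0) || (y == u1) by case: (Cu y).
have Lv y : le_of R v0 y = (y == v0) || (y == v1) by case: (Cv y).
have Lv' y : le_of R v1 y = (y == v1) by case: (Cv y).
have Rv y : le_of R y v0 = (y == v0) by case: (Cv y).
have Rv' y : le_of R y v1 = (y == v0) || (y == v1) by case: (Cv y).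
have uu : le_of R u0 u1 by rewrite Lu eqxx orbT.
case: (eqVneq u0 v0) => [e|n0].
  subst v0; have e1 : u1 = v1 by move: uu; rewrite Lv eq_sym (negbTE nu) /= => /eqP.
  by subst v1 => x y; rewrite !tperm1 mulg1 !perm1.
have n1 : u0 != v1.
  by apply/eqP => e; move: uu; rewrite e Lv' => /eqP e'; move: nu; rewrite e e' eqxx.
have n2 : u1 != v0.
  by apply/eqP => e; move: uu; rewrite e Rv (negbTE n0).
have n3 : u1 != v1.
  by apply/eqP => e; move: uu; rewrite e Rv' (negbTE n0) (negbTE n1).
have nu' : u1 != u0 by rewrite eq_sym.
have nv' : v1 != v0 by rewrite eq_sym.
have n0' : v0 != u0 by rewrite eq_sym.
have n1' : v1 != u0 by rewrite eq_sym.
have n2' : v0 != u1 by rewrite eq_sym.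
have n3' : v1 != u1 by rewrite eq_sym.
set s := (tperm u0 v0 * tperm u1 v1)%g.
have su0 : s u0 = v0 by rewrite /s permM tpermL tpermD //.
have sv0 : s v0 = u0 by rewrite /s permM tpermR tpermD //.
have su1 : s u1 = v1 by rewrite /s permM (@tpermD _ u0 v0 u1) // tpermL.
have sv1 : s v1 = u1 by rewrite /s permM (@tpermD _ u0 v0 v1) // tpermR.
have so z : z != u0 -> z != u1 -> z != v0 -> z != v1 -> s z = z.
  by move=> a b c d; rewrite /s permM (@tpermD _ u0 v0 z) 1?eq_sym // (@tpermD _ u1 v1 z) 1?eq_sym.
have inj y w : (s y == s w) = (y == w) by rewrite (inj_eq perm_inj).
move=> x y.
case: (eqVneq x u0) => [->|a].
  by rewrite su0 Lu Lv -su0 -su1 !inj.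
case: (eqVneq x u1) => [->|b].
  by rewrite su1 Lu' Lv' -su1 !inj.
case: (eqVneq x v0) => [->|c].
  by rewrite sv0 Lv Lu -sv0 -sv1 !inj.
case: (eqVneq x v1) => [->|d].
  by rewrite sv1 Lv' Lu' -sv1 !inj.
rewrite (so x) //.
case: (eqVneq y u0) => [->|a'].
  by rewrite su0 Ru Rv (negbTE a) (negbTE c).
case: (eqVneq y u1) => [->|b'].
  by rewrite su1 Ru' Rv' (negbTE a) (negbTE b) (negbTE c) (negbTE d).
case: (eqVneq y v0) => [->|c'].
  by rewrite sv0 Ru Rv (negbTE a) (negbTE c).
case: (eqVneq y v1) => [->|d'].
  by rewrite sv1 Ru' Rv' (negbTE a) (negbTE b) (negbTE c) (negbTE d).
by rewrite (so y).
Qed.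

Lemma swap_pts q (R : prel q) u0 u1 v0 v1 :
  ichain R u0 u1 -> ichain R v0 v1 -> u0 != u1 -> v0 != v1 ->
  (tperm u0 v0 * tperm u1 v1)%g u0 = v0 /\ (tperm u0 v0 * tperm u1 v1)%g u1 = v1.
Proof.
move=> Cu Cv nu nv.
have Lu y : le_of R u0 y = (y == u0) || (y == u1) by case: (Cu y).
have Lv y : le_of R v0 y = (y == v0) || (y == v1) by case: (Cv y).
have Lv' y : le_of R v1 y = (y == v1) by case: (Cv y).
have Rv y : le_of R y v0 = (y == v0) by case: (Cv y).
have Rv' y : le_of R y v1 = (y == v0) || (y == v1) by case: (Cv y).
have uu : le_of R u0 u1 by rewrite Lu eqxx orbT.
case: (eqVneq u0 v0) => [e|n0].
  subst v0; have e1 : u1 = v1 by move: uu; rewrite Lv eq_sym (negbTE nu) /= => /eqP.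
  by subst v1; rewrite !tperm1 mulg1 !perm1.
have n1 : u0 != v1.
  by apply/eqP => e; move: uu; rewrite e Lv' => /eqP e'; move: nu; rewrite e e' eqxx.
have n2 : u1 != v0.
  by apply/eqP => e; move: uu; rewrite e Rv (negbTE n0).
have n3 : u1 != v1.
  by apply/eqP => e; move: uu; rewrite e Rv' (negbTE n0) (negbTE n1).
have nv' : v1 != v0 by rewrite eq_sym.
have n2' : v0 != u1 by rewrite eq_sym.
split; first by rewrite permM tpermL tpermD.
by rewrite permM (@tpermD _ u0 v0 u1) // tpermL.
Qed.

Section FIso.
Variable p : nat.
Local Notation L := (@lshift p 2).
Local Notation N := (@rshift p 2).
Local Notation N0 := (rshift p (@ord0 1)).
Local Notation N1 := (rshift p (@ord_max 1)).

Definition ext (s : {perm 'I_p}) (x : 'I_(p + 2)) : 'I_(p + 2) :=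
  match split x with inl i => L (s i) | inr j => N j end.

Lemma ext_inj s : injective (ext s).
Proof.
move=> x y; rewrite /ext.
case: (split_ordP x) => [i|j] ->; case: (split_ordP y) => [k|l] ->;
  rewrite ?splitL ?splitN.
- by move/lshift_inj/perm_inj ->.
- by move/eqP; rewrite eq_lrshift.
- by move/eqP; rewrite eq_rlshift.
- by move/rshift_inj ->.
Qed.

Lemma F_iso (r1 r2 : prel p) : poset_iso (F r1) (F r2) = poset_iso r1 r2.
Proof.
apply/isoP/isoP => [[t H]|[s H]]; last first.
  exists (perm (@ext_inj s)) => x y; rewrite !permE /ext.
  case: (split_ordP x) => [i|j] ->; case: (split_ordP y) => [k|l] ->;
    by rewrite ?splitL ?splitN ?FE ?FLL ?FLN ?FNL ?FNN.
have C1 := F_ichain r1; have C2 := F_ichain r2.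
have Ct := ichain_tr H C1.
have nt : t N0 != t N1 by rewrite (inj_eq perm_inj) N01.
set sg := (tperm (t N0) N0 * tperm (t N1) N1)%g.
have [s0 s1] : sg (t N0) = N0 /\ sg (t N1) = N1 by apply: swap_pts => //; exact: N01.
have Aut := swap_aut Ct C2 nt (N01 p).
set t' := (t * sg)%g.
have H' x y : le_of (F r1) x y = le_of (F r2) (t' x) (t' y) by rewrite H Aut !permM.
have t0 : t' N0 = N0 by rewrite permM.
have t1 : t' N1 = N1 by rewrite permM.
pose s i := match split (t' (L i)) with inl k => k | inr _ => i end.
have sE i : t' (L i) = L (s i).
  rewrite /s; case: (split_ordP (t' (L i))) => [k|j] e //.
  have : t' (L i) = t' (N j) by rewrite e; case: (I2 j) => ->.
  by move/perm_inj/eqP; rewrite eq_lrshift.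
have s_inj : injective s.
  by move=> i k e; apply: (@lshift_inj p 2); apply: (@perm_inj _ t'); rewrite !sE e.
exists (perm s_inj) => i k; by rewrite !permE -FLL H' !sE FLL.
Qed.
End FIso.

Section Hasse.
Variable q : nat.
Variable R : prel q.
Hypothesis P : is_poset R.

Lemma up_cover x z : lt_of R x z -> exists w, covers R x w && le_of R w z.
Proof.
case: (posetP P) => R1 R2 R3.
suff S k : forall z, #|[set u | le_of R u z]| <= k -> lt_of R x z ->
   exists w, covers R x w && le_of R w z by exact: (S _ z (leqnn _)).
elim: k => [|k IH] {}z.
  by rewrite leqn0 => /eqP/cards0_eq/setP/(_ z); rewrite !inE R1.
move=> hk lt.
case c : (covers R x z); first by exists z; rewrite R1 andbT.
move: c; rewrite /covers lt /= => /negbFE/existsP[w' /andP[l1 l2]].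
have pr : [set u | le_of R u w'] \proper [set u | le_of R u z].
  apply/properP; split.
    apply/subsetP => u; rewrite !inE => h; apply: R3 h _.
    by case/andP: l2.
  exists z; rewrite !inE ?R1 //; apply/negP => h.
  case/andP: l2 => /negP ne le; apply: ne; apply/eqP; exact: R2.
have hk' : #|[set u | le_of R u w']| <= k by rewrite -ltnS (leq_trans (proper_card pr) hk).
have [w /andP[c h]] := IH w' hk' l1.
exists w; apply/andP; split => //; apply: R3 h _; by case/andP: l2.
Qed.

Lemma down_cover x z : lt_of R z x -> exists w, covers R w x && le_of R z w.
Proof.
case: (posetP P) => R1 R2 R3.
suff S k : forall z, #|[set u | le_of R z u]| <= k -> lt_of R z x ->
   exists w, covers R w x && le_of R z w by exact: (S _ z (leqnn _)).
elim: k => [|k IH] {}z.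
  by rewrite leqn0 => /eqP/cards0_eq/setP/(_ z); rewrite !inE R1.
move=> hk lt.
case c : (covers R z x); first by exists z; rewrite R1 andbT.
move: c; rewrite /covers lt /= => /negbFE/existsP[w' /andP[l1 l2]].
have pr : [set u | le_of R w' u] \proper [set u | le_of R z u].
  apply/properP; split.
    apply/subsetP => u; rewrite !inE => h; apply: R3 _ h.
    by case/andP: l1.
  exists z; rewrite !inE ?R1 //; apply/negP => h.
  case/andP: l1 => /negP ne le; apply: ne; apply/eqP; exact: R2.
have hk' : #|[set u | le_of R w' u]| <= k by rewrite -ltnS (leq_trans (proper_card pr) hk).
have [w /andP[c h]] := IH w' hk' l2.
exists w; apply/andP; split => //; apply: R3 _ h; by case/andP: l1.
Qed.

Lemma leaf_chain x y : covers R x y ->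
  (forall u v, covers R u v -> (u == x) || (v == x) || (u == y) || (v == y) ->
     (u == x) && (v == y)) -> ichain R x y.
Proof.
case: (posetP P) => R1 R2 R3.
move=> cxy H.
have /andP[nxy lxy] : lt_of R x y by case/andP: cxy.
have nl u : ~~ covers R u x.
  by apply/negP => c; have := H u x c ltac:(by rewrite eqxx ?orbT); case/andP => _ /eqP e; move: nxy; rewrite e eqxx.
have nu v : ~~ covers R y v.
  by apply/negP => c; have := H y v c ltac:(by rewrite eqxx ?orbT); case/andP => /eqP e _; move: nxy; rewrite e eqxx.
have ux v : covers R x v -> v = y.
  by move=> c; have := H x v c ltac:(by rewrite eqxx ?orbT); case/andP => _ /eqP.
have ly u : covers R u y -> u = x.
  by move=> c; have := H u y c ltac:(by rewrite eqxx ?orbT); case/andP => /eqP.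
have E1 z : le_of R z x = (z == x).
  case: (eqVneq z x) => [->|ne]; first by rewrite R1.
  apply/negP => h; have [w /andP[c _]] := down_cover (z:=z) (x:=x) ltac:(by rewrite /lt_of ne h).
  by move: (nl w); rewrite c.
have E2 z : le_of R y z = (z == y).
  case: (eqVneq z y) => [->|ne]; first by rewrite R1.
  apply/negP => h; have [w /andP[c _]] := up_cover (x:=y) (z:=z) ltac:(by rewrite /lt_of eq_sym ne h).
  by move: (nu w); rewrite c.
move=> z; split => //.
- case: (eqVneq z x) => [->|ne]; first by rewrite R1.
  case: (eqVneq z y) => [->//|ne'] /=.
  apply/negP => h; have [w /andP[c h2]] := up_cover (x:=x) (z:=z) ltac:(by rewrite /lt_of eq_sym ne h).
  by move: h2; rewrite (ux _ c) E2 (negbTE ne').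
- case: (eqVneq z x) => [->//|ne] /=.
  case: (eqVneq z y) => [->|ne']; first by rewrite R1.
  apply/negP => h; have [w /andP[c h2]] := down_cover (x:=y) (z:=z) ltac:(by rewrite /lt_of ne' h).
  by move: h2; rewrite (ly _ c) E1 (negbTE ne).
Qed.
End Hasse.

Lemma card_sum (T : finType) (P : pred T) : #|[set x | P x]| = \sum_x (P x : nat).
Proof. by rewrite -sum1dep_card big_mkcond; apply: eq_bigr => x _; case: (P x). Qed.

Lemma find_leaf q (R : prel q) A n : n_arcs R = A -> no_isolated R ->
  q = 2 * A - n -> 2 * n < A ->
  exists x y, covers R x y /\ (forall u v, covers R u v ->
     (u == x) || (v == x) || (u == y) || (v == y) -> (u == x) && (v == y)).
Proof.
move=> HA Hn Hq Hlt.
pose E := [set xy : 'I_q * 'I_q | covers R xy.1 xy.2].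
have cne e : e \in E -> e.1 != e.2.
  by rewrite inE => /andP[/andP[]].
pose inc (x : 'I_q) (e : 'I_q * 'I_q) := (e.1 == x) || (e.2 == x).
pose deg x := #|[set e | (e \in E) && inc x e]|.
pose leafy (e : 'I_q * 'I_q) := (deg e.1 <= 1) && (deg e.2 <= 1).
case: (boolP [exists e, (e \in E) && leafy e]) => [/existsP [[x y] /andP[xyE /andP[dx dy]]] | nl].
  exists x, y; split; first by rewrite inE in xyE.
  move=> u v c h.
  have uvE : (u, v) \in E by rewrite inE.
  have key z : deg z <= 1 -> inc z (x, y) -> inc z (u, v) -> (u, v) = (x, y).
    move=> /card_le1_eqP H i1 i2; apply: H; rewrite inE ?uvE ?xyE //.
  have h' : inc x (u, v) || inc y (u, v) by rewrite /inc /= !orbA.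
  case/orP: h' => h'.
    by case: (key x dx ltac:(by rewrite /inc eqxx) h') => -> ->; rewrite !eqxx.
  by case: (key y dy ltac:(by rewrite /inc eqxx orbT) h') => -> ->; rewrite !eqxx.
exfalso.
pose Lv := [set x | deg x <= 1].
have degP x : 0 < deg x.
  move/forallP: Hn => /(_ x) /existsP [y /orP[c|c]]; apply/card_gt0P.
    by exists (x, y); rewrite inE /inc /= eqxx inE c.
  by exists (y, x); rewrite inE /inc /= eqxx orbT inE c.
pose f x := odflt (x, x) [pick e | (e \in E) && inc x e].
have fP x : (f x \in E) && inc x (f x).
  rewrite /f; case: pickP => [e //|none].
  by have := degP x; rewrite /deg card_sum big1 // => e _; rewrite none.
have a : #|Lv| <= #|E|.
  have f_inj : {in Lv &, injective f}.
    move=> x x' hx hx' e; apply/eqP; apply/negP => nx.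
    have /andP[fE i1] := fP x; have /andP[_ i2] := fP x'.
    rewrite -e in i2.
    move/existsP: nl; apply; exists (f x); rewrite fE /leafy.
    rewrite !inE in hx hx'.
    move: (cne _ fE) i1 i2 nx hx hx'; case: (f x) => a b; rewrite /inc /=.
    move=> ab; case/orP=> /eqP ->; case/orP=> /eqP ->; rewrite ?eqxx //.
    - by move=> _ -> ->.
    - by move=> _ -> ->.
  rewrite -(card_in_imset f_inj); apply: subset_leq_card.
  by apply/subsetP => _ /imsetP[x _ ->]; case/andP: (fP x).
have b : \sum_x deg x = 2 * #|E|.
  rewrite /deg; under eq_bigr => x _ do rewrite card_sum.
  rewrite exchange_big /=.
  have -> : #|E| = \sum_e (e \in E : nat).
    by rewrite -card_sum; apply: eq_card => e; rewrite inE.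
  rewrite big_distrr /=; apply: eq_bigr => e _.
  case eE : (e \in E) => /=; last by rewrite big1.
  rewrite -card_sum.
  have -> : [set x | inc x e] = [set e.1; e.2].
    by apply/setP => z; rewrite !inE /inc (eq_sym e.1) (eq_sym e.2).
  by rewrite cards2 cne.
have c : 2 * q <= \sum_x deg x + #|Lv|.
  have -> : 2 * q = \sum_(x : 'I_q) 2 by rewrite sum_nat_const card_ord mulnC.
  rewrite card_sum -big_split /=.
  apply: leq_sum => x _.
  by have := degP x; case: (deg x) => [|[|k]].
have eA : #|E| = A by rewrite -HA.
rewrite eA in a b; rewrite b in c.
lia.
Qed.

Lemma surj p a n : 2 * n <= a -> p = 2 * a - n ->
  forall t, t \in H0_labelled (p + 2) a.+1 ->
  exists2 r, r \in H0_labelled p a & poset_iso t (F r).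
Proof.
move=> Ha Hp t tH.
have tH' := tH; rewrite inE in tH'; case/and3P: tH' => P /eqP A N.
have e1 : p + 2 = 2 * a.+1 - n by lia.
have e2 : 2 * n < a.+1 by lia.
have [x [y [cxy H]]] := find_leaf A N e1 e2.
have C := leaf_chain P cxy H.
have nxy : x != y by case/andP: cxy => /andP[].
set N0 := rshift p (@ord0 1); set N1 := rshift p (@ord_max 1).
have n01 : N0 != N1 := N01 p.
set y' := tperm x N0 y.
have ny' : y' != N0.
  by rewrite /y' -{2}(tpermL x N0) (inj_eq perm_inj) eq_sym.
set sg := (tperm x N0 * tperm y' N1)%g.
have sx : sg x = N0 by rewrite /sg permM tpermL tpermD // eq_sym.
have sy : sg y = N1 by rewrite /sg permM -/y' tpermL.
pose t' : prel (p + 2) := [ffun uv => t ((sg^-1 uv.1)%g, (sg^-1 uv.2)%g)].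
have Hrel u v : le_of t u v = le_of t' (sg u) (sg v) by rewrite /le_of ffunE /= !permK.
have t'H : t' \in H0_labelled (p + 2) a.+1 by exact: (inv_H0 Hrel tH).
have Ct := ichain_tr Hrel C; rewrite sx sy in Ct.
pose r : prel p := [ffun ij => t' (lshift 2 ij.1, lshift 2 ij.2)].
have E : F r = t'.
  suff S u v : le_of (F r) u v = le_of t' u v by apply/ffunP => -[u v]; exact: S.
  case: (split_ordP u) => [i|j] ->; case: (split_ordP v) => [k|l] ->.
  - by rewrite FLL /le_of ffunE.
  - rewrite FLN; case: (I2 l) => ->; case: (Ct (lshift 2 i)) => a1 a2 a3 a4.
      by rewrite -/N0 a1 eq_lrshift.
    by rewrite -/N1 a3 !eq_lrshift.
  - rewrite FNL; case: (I2 j) => ->; case: (Ct (lshift 2 k)) => a1 a2 a3 a4.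
      by rewrite -/N0 a2 !eq_lrshift.
    by rewrite -/N1 a4 !eq_lrshift.
  - rewrite FNN; case: (I2 j) => ->; case: (I2 l) => ->.
    + by case: (Ct N0) => a1 _ _ _; rewrite -/N0 a1 eqxx.
    + by case: (Ct N1) => _ a2 _ _; rewrite -/N0 -/N1 a2 eqxx orbT.
    + by case: (Ct N0) => _ _ _ a4; rewrite -/N0 -/N1 a4 (negbTE n01).
    + by case: (Ct N1) => _ _ a3 _; rewrite -/N1 a3 eqxx orbT.
exists r.
  by rewrite -F_H0 E.
by apply/isoP; exists sg => u v; rewrite E Hrel.
Qed.

Lemma step n a : 2 * n <= a -> H0 (2 * a - n) a = H0 (2 * a.+1 - n) a.+1.
Proof.
move=> Ha.
have -> : 2 * a.+1 - n = (2 * a - n) + 2 by lia.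
rewrite /H0.
apply: (count_transfer (F := @F (2 * a - n))).
- by move=> r rS; rewrite F_H0.
- by move=> r1 r2 _ _; rewrite F_iso.
- by move=> t tT; apply: (surj Ha).
Qed.

Theorem lemma6 (n a b : nat) :
  2 * n <= a -> 2 * n <= b -> H0 (2 * a - n) a = H0 (2 * b - n) b.
Proof.
suff S k : H0 (2 * (2 * n + k) - n) (2 * n + k) = H0 (2 * (2 * n) - n) (2 * n).
  move=> ha hb.
  have -> : a = 2 * n + (a - 2 * n) by lia.
  have -> : b = 2 * n + (b - 2 * n) by lia.
  by rewrite !S.
elim: k => [|k IH]; first by rewrite addn0.
by rewrite addnS -step ?IH //; lia.
Qed.
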